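(* Let $k\ge 2$ be an integer and let $\hat\lambda_k$ denote the value of $\lambda$ at the first double mode of the Poisson distribution of order $k$ (as defined in the context). Then $$\hat\lambda_k \ge \frac{2}{k+1}.$$
   Context: For an integer $k\ge1$ and a real $\lambda>0$, the Poisson distribution of order $k$ with parameter $\lambda$ is the distribution on $\{0,1,2,\dots\}$ with probability mass function $$f_k(n;\lambda)=e^{-k\lambda}\sum_{\substack{n_1,\dots,n_k\ge 0\\ n_1+2n_2+\dots+kn_k=n}}\frac{\lambda^{n_1+\dots+n_k}}{n_1!\cdots n_k!},\qquad n=0,1,2,\dots$$ A mode is any $n$ at which $f_k(n;\lambda)$ attains its global maximum over $n\ge0$. The distribution has a double mode at $m_1\neq m_2$ if $m_1$ and $m_2$ are exactly the two modes. The ''first double mode'' refers to the smallest value of $\lambda>0$, denoted $\hat\lambda_k$, at which the distribution has a double mode; at this value the two modes are $0$ and a positive integer $\hat m_k$. *)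

(* Defs.v *)
From HB Require Import structures.
From mathcomp Require Import all_boot all_order all_algebra.
From mathcomp Require Import reals.
From mathcomp Require Import sequences exp.
Set Implicit Arguments. Unset Strict Implicit. Unset Printing Implicit Defensive.
Import Order.TTheory GRing.Theory Num.Theory.
Local Open Scope ring_scope.

(* f_k(n; lam) = e^{-k lam} * sum over (n_1,...,n_k) >= 0 with
   n_1 + 2 n_2 + ... + k n_k = n of lam^(n_1+...+n_k) / (n_1! ... n_k!).
   The tuple is t : 'I_k -> 'I_(n+1), with t i playing the role of n_(i+1);
   the bound n_i <= n loses nothing since i*n_i <= n. *)
Definition poisson_k_pmf (R : realType) (k n : nat) (lam : R) : R :=
  expR (- (k%:R * lam)) *
  \sum_(t : {ffun 'I_k -> 'I_n.+1} | (\sum_(i < k) i.+1 * t i)%N == n)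
     lam ^+ (\sum_(i < k) (t i : nat))%N / ((\prod_(i < k) (t i)`!)%N)%:R.

Definition is_mode (R : realType) (k : nat) (lam : R) (n : nat) : Prop :=
  forall m : nat, poisson_k_pmf k m lam <= poisson_k_pmf k n lam.

Definition has_double_mode (R : realType) (k : nat) (lam : R) : Prop :=
  exists m1 m2 : nat, m1 <> m2 /\
    forall n : nat, is_mode k lam n <-> (n = m1 \/ n = m2).

Definition is_first_double_mode (R : realType) (k : nat) (lam0 : R) : Prop :=
  0 < lam0 /\ has_double_mode k lam0 /\
  forall lam : R, 0 < lam -> has_double_mode k lam -> lam0 <= lam.

(* Main.v *)
Require Import Defs.
From HB Require Import structures.
From mathcomp Require Import all_boot all_order all_algebra.
From mathcomp Require Import reals.
From mathcomp Require Import sequences exp.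
From mathcomp Require Import zify ring lra.

Set Implicit Arguments. Unset Strict Implicit. Unset Printing Implicit Defensive.
Import Order.TTheory GRing.Theory Num.Theory.
Local Open Scope ring_scope.

Definition wt (k n : nat) (t : {ffun 'I_k -> 'I_n.+1}) : nat := (\sum_(i < k) i.+1 * t i)%N.
Definition ww (R : realType) (k n : nat) (lam : R) (t : {ffun 'I_k -> 'I_n.+1}) : R :=
  lam ^+ (\sum_(i < k) (t i : nat))%N / ((\prod_(i < k) (t i)`!)%N)%:R.
Definition SS (R : realType) (k n : nat) (lam : R) : R :=
  \sum_(t : {ffun 'I_k -> 'I_n.+1} | wt t == n) ww lam t.

Lemma pmfE (R : realType) k n (lam : R) : poisson_k_pmf k n lam = expR (- (k%:R * lam)) * SS k n lam.
Proof. by []. Qed.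

Lemma two_le_sum k (F : 'I_k -> nat) i j : i != j -> (F i + F j <= \sum_(l < k) F l)%N.
Proof.
move=> nij; rewrite (bigD1 i) //= (bigD1 j) 1?eq_sym //=; lia.
Qed.

Lemma one_le_sum k (F : 'I_k -> nat) i : (F i <= \sum_(l < k) F l)%N.
Proof. rewrite (bigD1 i) //=; lia. Qed.

Lemma fact_gt0' n : (0 < n`!)%N. Proof. exact: fact_gt0. Qed.

Lemma prod_fact_gt0 k (F : 'I_k -> nat) : (0 < \prod_(i < k) (F i)`!)%N.
Proof. by rewrite prodn_gt0 // => i; exact: fact_gt0. Qed.

Lemma shiftA (R : realType) (k p : nat) (lam : R) (i : 'I_k) :
  \sum_(t : {ffun 'I_k -> 'I_(p + i.+1).+1} | wt t == (p + i.+1)%N) (t i)%:R * ww lam t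
  = lam * SS k p lam.
Proof.
pose h : {ffun 'I_k -> 'I_p.+1} -> {ffun 'I_k -> 'I_(p + i.+1).+1} := fun t' =>
  [ffun j => inord (t' j + (j == i))].
pose h' : {ffun 'I_k -> 'I_(p + i.+1).+1} -> {ffun 'I_k -> 'I_p.+1} := fun t =>
  [ffun j => inord (t j - (j == i))].
have hE t' j : (h t' j : nat) = (t' j + (j == i))%N.
  rewrite /h ffunE inordK //; have := ltn_ord (t' j); case: (j == i) => /=; lia.
have wth t' : wt (h t') = (wt t' + i.+1)%N.
  rewrite /wt (eq_bigr (fun j : 'I_k => j.+1 * t' j + j.+1 * (j == i))%N); last first.
    by move=> j _; rewrite hE mulnDr.
  rewrite big_split /=; congr (_ + _)%N.
  rewrite (bigD1 i) //= eqxx big1 ?muln1 ?addn0 // => j /negbTE ->; by rewrite muln0.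
rewrite (bigID (fun t : {ffun 'I_k -> 'I_(p + i.+1).+1} => 0 < t i)%N) /=.
rewrite [X in _ + X]big1 ?addr0; last first.
  by move=> t /andP [_]; rewrite lt0n negbK => /eqP ->; rewrite mul0r.
rewrite (reindex_onto h h'); last first.
  move=> t /andP [/eqP wtt ti0]; apply/ffunP => j; apply/val_inj.
  rewrite /= hE /h' ffunE inordK.
    case: (eqVneq j i) => [->|nji] /=; lia.
  case: (eqVneq j i) => [->|nji] /=.
    have := one_le_sum (fun l => l.+1 * t l)%N i; rewrite -/(wt t) wtt /=; nia.
  have := two_le_sum (fun l => l.+1 * t l)%N nji; rewrite -/(wt t) wtt /=; nia.
rewrite /SS mulr_sumr; apply: eq_big.
  move=> t'; rewrite wth hE eqn_add2r eqxx addn1 /= andbT.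
  have -> : h' (h t') == t'.
    apply/eqP/ffunP => j; apply/val_inj; rewrite /h' ffunE hE addnK /= inordK //.
  by rewrite andbT.
move=> t' _; rewrite hE eqxx addn1 /ww.
have -> : (\sum_(j < k) (h t' j : nat) = (\sum_(j < k) (t' j : nat)).+1)%N.
  rewrite (eq_bigr (fun j : 'I_k => t' j + (j == i))%N); last by move=> j _; rewrite hE.
  rewrite big_split /= -[RHS]addn1; congr (_ + _)%N.
  rewrite (bigD1 i) //= eqxx big1 ?addn0 // => j /negbTE ->//.
have -> : (\prod_(j < k) (h t' j)`! = (t' i).+1 * \prod_(j < k) (t' j)`!)%N.
  rewrite (bigD1 i) //= [in RHS](bigD1 i) //= hE eqxx addn1 factS mulnA; congr (_ * _)%N.
  by apply: eq_bigr => j /negbTE nji; rewrite hE nji addn0.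
have P0 : ((\prod_(j < k) (t' j)`!)%N%:R != 0 :> R).
  by rewrite pnatr_eq0 -lt0n prod_fact_gt0.
rewrite natrM exprS; field; apply/andP; split=> //; by rewrite -(natrD R 1) pnatr_eq0 add1n.
Qed.

Lemma natsum k m : (2 * \sum_(i < k) i.+1 * (i.+1 <= m) = minn k m * (minn k m).+1)%N.
Proof.
elim: k => [|k IH]; first by rewrite big_ord0 min0n.
rewrite big_ord_recr /= mulnDr IH.
case h: (k < m)%N.
  rewrite (_ : minn k m = k); last by lia.
  rewrite (_ : minn k.+1 m = k.+1); last by lia.
  rewrite muln1; lia.
rewrite (_ : minn k m = m); last by lia.
rewrite (_ : minn k.+1 m = m); last by lia.
rewrite muln0; lia.
Qed.

Lemma tA (R : realType) k (lam : R) (i : 'I_k) m :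
  \sum_(t : {ffun 'I_k -> 'I_m.+1} | wt t == m) (t i)%:R * ww lam t
  = if (i.+1 <= m)%N then lam * SS k (m - i.+1) lam else 0.
Proof.
case: (leqP i.+1 m) => h.
  have gen : forall m' p, m' = (p + i.+1)%N ->
    \sum_(t : {ffun 'I_k -> 'I_m'.+1} | wt t == m') (t i)%:R * ww lam t = lam * SS k p lam.
    by move=> m' p ->; exact: shiftA.
  rewrite (gen m (m - i.+1)%N) //; lia.
apply: big1 => t /eqP wtt.
have := one_le_sum (fun l => l.+1 * t l)%N i; rewrite -/(wt t) wtt /= => hh.
have -> : (t i : nat) = 0%N by move: hh; case: (nat_of_ord (t i)) => [|x] //; rewrite mulnS; lia.
by rewrite mul0r.
Qed.

Lemma tB (R : realType) k (lam : R) m :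
  m%:R * SS k m lam =
  lam * \sum_(i < k) i.+1%:R * (if (i.+1 <= m)%N then SS k (m - i.+1) lam else 0).
Proof.
rewrite /SS mulr_sumr.
rewrite (eq_bigr (fun t : {ffun 'I_k -> 'I_m.+1} => \sum_(i < k) i.+1%:R * ((t i)%:R * ww lam t))); last first.
  move=> t /eqP wtt; have -> : m%:R = (wt t)%:R :> R by rewrite wtt. rewrite /wt natr_sum mulr_suml; apply: eq_bigr => i _.
  by rewrite natrM mulrA.
rewrite exchange_big /= mulr_sumr; apply: eq_bigr => i _.
rewrite -mulr_sumr tA; case: ifP => _; last by rewrite !mulr0.
by rewrite /SS mulrCA.
Qed.

Lemma ww_ge0 (R : realType) k n (lam : R) (t : {ffun 'I_k -> 'I_n.+1}) : 0 <= lam -> 0 <= ww lam t.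
Proof. by move=> h; rewrite /ww divr_ge0 // exprn_ge0. Qed.

Lemma SS_ge0 (R : realType) k n (lam : R) : 0 <= lam -> 0 <= SS k n lam.
Proof. by move=> h; rewrite /SS sumr_ge0 // => t _; exact: ww_ge0. Qed.

Lemma SS0 (R : realType) k (lam : R) : 0 <= lam -> 0 < SS k 0 lam.
Proof.
move=> h; rewrite /SS (bigD1 [ffun=> ord0]) /=; last first.
  by rewrite /wt big1 // => i _; rewrite ffunE muln0.
have w1 : ww lam ([ffun=> ord0] : {ffun 'I_k -> 'I_1}) = 1.
  rewrite /ww big1 ?expr0; last by move=> i _; rewrite ffunE.
  by rewrite big1 ?div1r ?invr1 // => i _; rewrite ffunE.
rewrite w1.
have : 0 <= \sum_(t : {ffun 'I_k -> 'I_1} | (wt t == 0%N) && (t != [ffun=> ord0])) ww lam t.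
  by rewrite sumr_ge0 // => t _; exact: ww_ge0.
lra.
Qed.

Theorem proposition2 (R : realType) (k : nat) (hk : (2 <= k)%N) (lam0 : R) :
  is_first_double_mode k lam0 -> 2 / (k.+1)%:R <= lam0.
Proof.
move=> [lpos [[m1 [m2 [neq H]]] _]].
have [m [mpos mmode]] : exists m, (0 < m)%N /\ is_mode k lam0 m.
  case: m1 H neq => [|m1] H neq.
    exists m2; split; first by case: m2 neq H => //.
    by apply/H; right.
  by exists m1.+1; split => //; apply/H; left.
have Sle n : SS k n lam0 <= SS k m lam0.
  have := mmode n; rewrite !pmfE ler_pM2l //; exact: expR_gt0.
have l0 : 0 <= lam0 by exact: ltW.
have Spos : 0 < SS k m lam0 by apply: (lt_le_trans (SS0 k l0)).
pose c := (\sum_(i < k) i.+1 * (i.+1 <= m))%N.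
have hc : m%:R <= lam0 * c%:R.
  rewrite -(ler_pM2r Spos) tB -mulrA ler_pM2l // /c natr_sum mulr_suml.
  apply: ler_sum => i _; rewrite natrM -mulrA ler_pM2l //.
  case: ifP => _; last by rewrite mul0r.
  by rewrite mul1r.
have hc2 : (2 * c <= m * k.+1)%N.
  rewrite /c natsum; apply: leq_mul; lia.
have hc2' : 2 * c%:R <= m%:R * k.+1%:R :> R.
  by rewrite -!natrM ler_nat.
have mp : 0 < m%:R :> R by rewrite ltr0n.
have kp : 0 < k.+1%:R :> R by rewrite ltr0n.
rewrite ler_pdivrMr //.
nra.
Qed.
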